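(* Let $G$ be a graph of order $p$ with $1\le\delta(G)\le p-2$. If $G$ has a $\delta$-sequence $\{\mathcal G_i\}_{i=1}^s$ such that $\tilde z_i(G)=\sum_{j=2}^i\tilde y_j(G)\ge 0$ for all $2\le i\le s$, then $str(G)=p+\delta(G)$.
   Context: All graphs are finite, simple and loopless. For a graph $G$ of order $p$, a numbering of $G$ is a bijection $f:V(G)\to[1,p]$, where $[a,b]$ denotes the set of integers from $a$ to $b$. The strength of a numbering $f$ is $str_f(G)=\max\{f(u)+f(v): uv\in E(G)\}$, and the strength of a graph $G$ with at least one edge is $str(G)=\min\{str_f(G): f \text{ a numbering of } G\}$. $\delta(G)$ denotes the minimum degree. $G+H$ denotes disjoint union, $mK_1$ the edgeless graph on $m$ vertices, $K_r$ the complete graph. $\delta$-sequence: Let $G$ have order $p$ with $1\le\delta(G)\le p-2$. Set $\mathcal G_1=G_1=G$, $m_1=0$. For each $i$, write $\mathcal G_i=m_iK_1+G_i$, where $m_i\ge0$ is the number of isolated vertices of $\mathcal G_i$ and $G_i$ has no isolated vertices; put $\delta_i=\delta(G_i)$. If $\mathcal G_i$ is neither of the form $mK_1$ ($m\ge1$) nor $mK_1+K_r$ ($m\ge0$, $r\ge2$), choose a vertex $u_i$ of $G_i$ with $\deg_{G_i}(u_i)=\delta_i$ and let $\mathcal G_{i+1}$ be obtained from $G_i$ by deleting $u_i$ together with all its neighbours in $G_i$ (equivalently, from $\mathcal G_i$ by deleting its $m_i$ isolated vertices, $u_i$ and $N_{G_i}(u_i)$). Stop at the first index $s$ ($s\ge2$)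 for which $\mathcal G_s$ is $m_sK_1$ with $m_s\ge1$ (then set $\delta_s=0$) or $m_sK_1+K_r$ with $m_s\ge0$, $r\ge2$ (then $\delta_s=r-1$). The resulting $\{\mathcal G_i\}_{i=1}^s$ is a $\delta$-sequence of $G$. Define $\tilde y_j(G)=m_j+1-\delta_j$ for $1\le j\le s$ and $\tilde z_i(G)=\sum_{j=2}^i\tilde y_j(G)$. *)

(* Defs.v *)
(* A simple graph is a symmetric irreflexive relation e on a finType T. *)
From mathcomp Require Import all_boot all_order all_algebra.
Set Implicit Arguments. Unset Strict Implicit. Unset Printing Implicit Defensive.

Section Defs.
Variables (T : finType) (e : rel T).

Definition degin (A : {set T}) (v : T) : nat := #|[set u in A | e v u]|.

Definition min_deg_on (A : {set T}) : nat :=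
  if A == set0 then 0 else \big[minn/#|T|]_(v in A) degin A v.

Definition min_deg : nat := min_deg_on [set: T].

Definition isol (S : {set T}) : {set T} := [set v in S | degin S v == 0].
Definition nonisol (S : {set T}) : {set T} := [set v in S | degin S v != 0].

Definition m_of (S : {set T}) : nat := #|isol S|.

Definition is_complete_on (A : {set T}) : Prop :=
  forall u v, u \in A -> v \in A -> u != v -> e u v.

(* induced graph on S is m K_1 with m >= 1 *)
Definition term_empty (S : {set T}) : Prop := S != set0 /\ nonisol S = set0.
(* induced graph on S is m K_1 + K_r with r >= 2 *)
Definition term_complete (S : {set T}) : Prop :=
  2 <= #|nonisol S| /\ is_complete_on (nonisol S).
Definition terminal (S : {set T}) : Prop := term_empty S \/ term_complete S.

(* closed neighbourhood of u in G_i = nonisol S *)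
Definition closed_nbhd (S : {set T}) (u : T) : {set T} :=
  u |: [set w in nonisol S | e u w].

(* A delta-sequence: vertex sets S 1, ..., S s (script G_i is the graph
   induced on S i). *)
Definition delta_seq (Sq : nat -> {set T}) (s : nat) : Prop :=
  [/\ 2 <= s, Sq 1 = [set: T],
      (forall i, 1 <= i < s ->
         ~ terminal (Sq i) /\
         exists2 u, u \in nonisol (Sq i) &
           degin (nonisol (Sq i)) u = min_deg_on (nonisol (Sq i)) /\
           Sq i.+1 = nonisol (Sq i) :\: closed_nbhd (Sq i) u)
    & terminal (Sq s)].

(* delta_i along the sequence, following the paper's convention at i = s *)
Definition delta_i (Sq : nat -> {set T}) (s i : nat) : nat :=
  if i == s then
    (if nonisol (Sq s) == set0 then 0 else #|nonisol (Sq s)| - 1)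
  else min_deg_on (nonisol (Sq i)).

Definition y_tilde (Sq : nat -> {set T}) (s j : nat) : int :=
  ((m_of (Sq j))%:Z + 1 - (delta_i Sq s j)%:Z)%R.

Definition z_tilde (Sq : nat -> {set T}) (s i : nat) : int :=
  (\sum_(2 <= j < i.+1) y_tilde Sq s j)%R.

Definition numbering (f : T -> nat) : Prop :=
  injective f /\ forall x, 1 <= f x <= #|T|.

Definition str_f (f : T -> nat) : nat :=
  \max_(u : T) \max_(v : T | e u v) (f u + f v).

Definition is_strength (k : nat) : Prop :=
  (exists f, numbering f /\ str_f f = k) /\
  (forall f, numbering f -> k <= str_f f).

End Defs.

(* Main.v *)
Require Import Defs.
From mathcomp Require Import all_boot all_order all_algebra zify.
From Stdlib Require Import IndefiniteDescription.
Set Implicit Arguments. Unset Strict Implicit. Unset Printing Implicit Defensive.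

Lemma bigmin_le (I:finType) (P : pred I) (F : I -> nat) x0 i :
  P i -> \big[minn/x0]_(j | P j) F j <= F i.
Proof.
move=> Pi; move: (mem_index_enum i); elim: (index_enum I) => // a r IH.
rewrite big_cons inE; case/predU1P => [<-|ir]; first by rewrite Pi geq_minl.
case: (P a); last exact: IH.
by rewrite geq_min IH ?orbT.
Qed.

Section Main.
Variables (T : finType) (e : rel T) (s : nat) (S : nat -> {set T}) (u : nat -> T).
Hypotheses (esym : symmetric e) (eirr : irreflexive e) (s2 : 2 <= s) (S1 : S 1 = setT).
Hypothesis Hstep : forall i, 1 <= i < s ->
  [/\ u i \in nonisol e (S i),
      degin e (nonisol e (S i)) (u i) = min_deg_on e (nonisol e (S i)) &
      S i.+1 = nonisol e (S i) :\: closed_nbhd e (S i) (u i)].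
Hypothesis Hlast : nonisol e (S s) != set0 -> u s \in nonisol e (S s).

Lemma degin0P (A : {set T}) x y : degin e A x = 0 -> y \in A -> ~~ e x y.
Proof.
move=> /eqP; rewrite cards_eq0 => /eqP H yA; apply/negP => exy.
have: y \in [set w in A | e x w] by rewrite inE yA exy.
by rewrite H inE.
Qed.

Lemma degin_pos (A : {set T}) x y : y \in A -> e x y -> degin e A x != 0.
Proof. by move=> yA exy; apply/eqP => /degin0P /(_ yA); rewrite exy. Qed.

Lemma nonisolS (A : {set T}) : nonisol e A \subset A.
Proof. by apply/subsetP => x; rewrite inE => /andP[]. Qed.

Lemma isol_nonisol (A : {set T}) x : x \in A -> (x \in isol e A) = (x \notin nonisol e A).
Proof. by move=> xA; rewrite !inE xA /=; case: eqP. Qed.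

Lemma Ssub i : 1 <= i < s -> S i.+1 \subset S i.
Proof.
move=> H; case: (Hstep H) => _ _ ->.
apply: subset_trans (nonisolS _); exact: subsetDl.
Qed.

Lemma Snest i j : 1 <= i -> i <= j -> j <= s -> S j \subset S i.
Proof.
move=> Hi; elim: j => [|j IH] Hij Hjs; first by lia.
move: Hij; rewrite leq_eqVlt => /orP[/eqP->|Hij]; first exact: subxx.
apply: subset_trans (Ssub _) (IH _ _); lia.
Qed.

Definition st x := \max_(i < s.+1 | x \in S i) (i : nat).

Lemma st_max x i : i <= s -> x \in S i -> i <= st x.
Proof. by move=> Hi xS; apply: (@leq_bigmax_cond _ _ _ (Ordinal (Hi : i < s.+1))). Qed.

Lemma st_le x : st x <= s.
Proof. by apply/bigmax_leqP => i _; rewrite -ltnS. Qed.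

Lemma st_in x : x \in S (st x).
Proof.
have P1 : x \in S (@inord s 1) by rewrite inordK ?S1 ?inE //; lia.
rewrite /st (@bigmax_eq_arg _ (inord 1) (fun i : 'I_s.+1 => x \in S i)) //.
by case: arg_maxnP.
Qed.

Lemma st_ge1 x : 1 <= st x.
Proof. by apply: st_max; [lia | rewrite S1 inE]. Qed.

Lemma st_notin x : st x < s -> x \notin S (st x).+1.
Proof. by move=> H; apply/negP => /(st_max H); rewrite ltnn. Qed.

Lemma in_S_le x i : 1 <= i <= st x -> x \in S i.
Proof.
case/andP=> H1 H2; apply: (subsetP (Snest H1 H2 (st_le x))); exact: st_in.
Qed.

Lemma st_eq x k : 1 <= k <= s -> x \in S k -> (k < s -> x \notin S k.+1) -> st x = k.
Proof.
case/andP=> H1 H2 xS Hn; apply/eqP; rewrite eqn_leq st_max // andbT.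
rewrite leqNgt; apply/negP => Hlt.
have Hks : k < s by have := st_le x; lia.
by move: (Hn Hks); rewrite in_S_le //; lia.
Qed.


Lemma closed_contra i y : 1 <= i < s -> y \in S i.+1 -> ~~ e (u i) y.
Proof.
move=> H; case: (Hstep H) => _ _ ->; rewrite inE => /andP[Hn Hy].
apply/negP => E; move/negP: Hn; apply.
rewrite /closed_nbhd in_setU1 inE E andbT; by move: Hy; rewrite inE => ->; rewrite orbT.
Qed.

Definition cls x : nat :=
  if x \in isol e (S (st x)) then 2 else if x == u (st x) then 1 else 0.

Lemma cls_le2 x : cls x <= 2.
Proof. by rewrite /cls; case: ifP => //; case: ifP. Qed.

Lemma cls0 x : x \notin isol e (S (st x)) -> x != u (st x) -> cls x = 0.
Proof. by rewrite /cls => /negbTE -> /negbTE ->. Qed.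

Lemma edge_cls x y : e x y -> cls y != 0 ->
  cls x = 0 /\ (st x < st y \/ (st x = st y /\ cls y = 1)).
Proof.
move=> exy; have eyx : e y x by rewrite esym.
have Hi1 := st_ge1 y; have Hj1 := st_ge1 x.
have Hyin := st_in y; have Hxin := st_in x.
case: (leqP (st y) (st x)) => Hij.
- have xSi : x \in S (st y) by apply: in_S_le; lia.
  rewrite /cls; case: ifP => [|yni].
    by rewrite inE => /andP[_ /eqP /degin0P /(_ xSi)]; rewrite eyx.
  case: ifP => // /eqP yu _.
  have ynon : y \in nonisol e (S (st y)).
    by move: yni; rewrite isol_nonisol // => /negbFE.
  move: Hij; rewrite leq_eqVlt => /orP[/eqP Heq|Hlt].
  + split; last by right.
    apply: cls0.
      rewrite isol_nonisol // negbK inE Hxin /=; apply: (degin_pos (y := y)) => //; by rewrite -Heq.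
    apply/negP => /eqP xu; move: exy; rewrite xu -Heq -yu.
    by rewrite eirr.
  + have Hs : st y < s by have := st_le x; lia.
    have xS1 : x \in S (st y).+1 by apply: in_S_le; lia.
    have H1 : 1 <= st y < s by rewrite Hi1 Hs.
    by have := closed_contra H1 xS1; rewrite -yu eyx.
- have Hs : st x < s by have := st_le y; lia.
  have yS1 : y \in S (st x).+1 by apply: in_S_le; lia.
  have ySj : y \in S (st x) by apply: in_S_le; lia.
  move=> _; split; last by left.
  apply: cls0.
    rewrite isol_nonisol // negbK inE Hxin /=; exact: (degin_pos (y := y)).
  apply/negP => /eqP xu.
  have H1 : 1 <= st x < s by rewrite Hj1 Hs.
  by have := closed_contra H1 yS1; rewrite -xu exy.
Qed.

Lemma cls2E x : (cls x == 2) = (x \in isol e (S (st x))).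
Proof. by rewrite /cls; case: ifP => //; case: ifP. Qed.
Lemma cls1E x : (cls x == 1) = (x \notin isol e (S (st x))) && (x == u (st x)).
Proof. by rewrite /cls; case: ifP => //; case: ifP. Qed.
Lemma cls0E x : (cls x == 0) = (x \notin isol e (S (st x))) && (x != u (st x)).
Proof. by rewrite /cls; case: ifP => //; case: ifP. Qed.

Lemma next_nonisol k : 1 <= k < s -> S k.+1 \subset nonisol e (S k).
Proof. by move=> H; case: (Hstep H) => _ _ ->; apply: subsetDl. Qed.

Lemma nonisol_in A x : x \in nonisol e A -> x \in A.
Proof. by move/(subsetP (nonisolS A)). Qed.

Lemma nonisol_not_isol A x : x \in nonisol e A -> x \notin isol e A.
Proof. by move=> H; rewrite isol_nonisol ?H // (nonisol_in H). Qed.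

Lemma u_st k : 1 <= k < s -> st (u k) = k.
Proof.
move=> H; case: (Hstep H) => Hu _ HS.
apply: st_eq; first by case/andP: H => -> /ltnW ->.
  exact: nonisol_in Hu.
move=> _; rewrite HS inE negb_and negbK /closed_nbhd in_setU1 eqxx.
by [].
Qed.

Definition cs (c k : nat) := #|[set x | (st x == k) && (cls x == c)]|.

Lemma cs_0 c : cs c 0 = 0.
Proof.
apply/eqP; rewrite /cs cards_eq0; apply/eqP/setP => x; rewrite !inE.
by have := st_ge1 x; case: (st x).
Qed.

Lemma cs_iso k : 1 <= k <= s -> cs 2 k = m_of e (S k).
Proof.
move=> Hk; rewrite /cs /m_of; apply: eq_card => x; rewrite inE cls2E.
apply/idP/idP => [/andP[/eqP <- //]|Hx].
have xS : x \in S k by move: Hx; rewrite inE => /andP[].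
have -> : st x = k.
  apply: st_eq => // Hks; apply/negP => HS1.
  have Hk' : 1 <= k < s by case/andP: Hk => -> _; rewrite Hks.
  by have := nonisol_not_isol (subsetP (next_nonisol Hk') _ HS1); rewrite Hx.
by rewrite eqxx.
Qed.

Lemma st_s x : x \in S s -> st x = s.
Proof. by move=> H; apply: st_eq => //; [rewrite leqnn andbT; lia | rewrite ltnn]. Qed.

Lemma hub_set k : 1 <= k < s ->
  [set x | (st x == k) && (cls x == 0)] = [set w in nonisol e (S k) | e (u k) w].
Proof.
move=> Hk; case: (Hstep Hk) => Hu _ HS.
apply/setP => x; rewrite in_set [in RHS]in_set cls0E.
apply/idP/idP.
- case/andP => /eqP Hst /andP[Hni Hnu].
  have xS : x \in S k by rewrite -Hst st_in.
  have Hnon : x \in nonisol e (S k).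
    by move: Hni; rewrite Hst isol_nonisol // negbK.
  have Hks : st x < s by rewrite Hst; case/andP: Hk => _ ->.
  have := st_notin Hks; rewrite Hst HS in_setD negb_and negbK Hnon orbF.
  rewrite /closed_nbhd in_setU1 in_set -Hst (negbTE Hnu) /= Hst.
  by case/andP.
- case/andP => Hnon Eux.
  have xS := nonisol_in Hnon.
  have -> : st x = k.
    apply: st_eq => //; first by case/andP: Hk => -> /ltnW ->.
    move=> _; rewrite HS in_setD negb_and negbK /closed_nbhd in_setU1 in_set Hnon Eux.
    by rewrite orbT.
  rewrite eqxx nonisol_not_isol //=.
  by apply/eqP => xu; move: Eux; rewrite -xu eirr.
Qed.

Lemma cs_hub k : 1 <= k <= s -> cs 0 k = delta_i e S s k.
Proof.
move=> Hk; rewrite /cs /delta_i.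
case: (ltnP k s) => Hks.
- have Hk' : 1 <= k < s by case/andP: Hk => -> _.
  rewrite hub_set // (ltn_eqF Hks).
  by case: (Hstep Hk') => _ H _; rewrite -H.
- have -> : k = s by apply/eqP; rewrite eqn_leq Hks andbT; case/andP: Hk.
  rewrite eqxx.
  have -> : [set x | (st x == s) && (cls x == 0)] = nonisol e (S s) :\ u s.
    apply/setP => x; rewrite !inE cls0E.
    apply/idP/idP.
    + case/andP => /eqP Hst /andP[Hni Hnu].
      have xS : x \in S s by rewrite -Hst st_in.
      rewrite -Hst Hnu /= st_in /=.
      by move: Hni; rewrite isol_nonisol ?st_in // negbK inE st_in.
    + case/and3P => Hnu xS Hdeg.
      have Hnon' : x \in nonisol e (S s) by rewrite inE xS Hdeg.
      by rewrite st_s // eqxx Hnu nonisol_not_isol.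
  case: ifP => [/eqP ->|/negbT Hne].
    by apply/eqP; rewrite cards_eq0; apply/eqP/setP => x; rewrite !inE andbF.
  by rewrite (cardsD1 (u s) (nonisol e (S s))) (Hlast Hne) add1n subn1.
Qed.

Lemma cs_u k : 1 <= k <= s -> cs 1 k + ((k == s) && (nonisol e (S s) == set0)) = 1.
Proof.
move=> Hk; rewrite /cs.
case: (ltnP k s) => Hks.
- have Hk' : 1 <= k < s by case/andP: Hk => -> _.
  rewrite (ltn_eqF Hks) addn0.
  have -> : [set x | (st x == k) && (cls x == 1)] = [set u k].
    apply/setP => x; rewrite !inE cls1E.
    apply/idP/idP.
    + by case/andP => /eqP <- /andP[_ ->].
    + move/eqP => ->; rewrite u_st // eqxx eqxx andbT.
      by case: (Hstep Hk') => Hu _ _; rewrite nonisol_not_isol.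
  exact: cards1.
- have -> : k = s by apply/eqP; rewrite eqn_leq Hks andbT; case/andP: Hk.
  rewrite eqxx /=.
  case: (boolP (nonisol e (S s) == set0)) => [/eqP Hne|Hne].
  + rewrite addn1; congr _.+1; apply/eqP; rewrite cards_eq0; apply/eqP/setP => x.
    rewrite !inE cls1E; apply/negP => /andP[/eqP Hst /andP[Hni _]].
    have xS : x \in S s by rewrite -Hst st_in.
    by move: Hni; rewrite Hst isol_nonisol // Hne inE.
  + rewrite addn0.
    have -> : [set x | (st x == s) && (cls x == 1)] = [set u s].
      apply/setP => x; rewrite !inE cls1E.
      apply/idP/idP.
      * by case/andP => /eqP <- /andP[_ ->].
      * have Hu := Hlast Hne.
        move/eqP => ->; rewrite st_s ?(nonisol_in Hu) // eqxx eqxx andbT.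
        by rewrite nonisol_not_isol.
    exact: cards1.
Qed.

Lemma C i : 1 <= i <= s ->
  ((\sum_(k < i.+1) (cs 1 k + cs 2 k))%:Z + (nat_of_bool ((i == s) && (nonisol e (S s) == set0)))%:Z
   = (\sum_(k < i.+1) cs 0 k)%:Z + 1 - (cs 0 1)%:Z + (cs 2 1)%:Z + z_tilde e S s i)%R.
Proof.
elim: i => [|i IH] Hi; first by [].
case: (posnP i) => [->|Hi0].
- rewrite !big_ord_recr !big_ord0 /= !cs_0 /z_tilde big_geq //.
  have H1 := cs_u (k := 1) ltac:(lia); rewrite (ltn_eqF s2) /= in H1 *; lia.
- have Hi' : 1 <= i <= s by lia.
  have := IH Hi'; rewrite (@big_ord_recr _ _ _ i.+1) (@big_ord_recr _ _ _ i.+1) /=.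
  have Hn : (i == s) = false by apply/negbTE; lia.
  rewrite Hn /= => IH'.
  rewrite /z_tilde big_nat_recr //= -/(z_tilde e S s i) /y_tilde.
  rewrite -(cs_iso (k := i.+1)) // -(cs_hub (k := i.+1)) //.
  have := cs_u (k := i.+1) Hi; lia.
Qed.

Definition K x := if cls x == 0 then st x else s + 2 * (s - st x) + cls x.
Definition key x := K x * #|T| + enum_rank x.
Definition f x := #|[set y | key y <= key x]|.

Lemma key_lt x y : K x < K y -> key x < key y.
Proof.
move=> H; rewrite /key.
have := ltn_ord (enum_rank x); have := ltn_ord (enum_rank y).
move: (nat_of_ord (enum_rank x)) (nat_of_ord (enum_rank y)) => a b Ha Hb.
have H1 : K x * #|T| + a < (K x).+1 * #|T| by rewrite mulSn addnC ltn_add2r.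
have H2 : (K x).+1 * #|T| <= K y * #|T| by rewrite leq_mul2r H orbT.
lia.
Qed.

Lemma key_inj : injective key.
Proof.
move=> x y H.
have : (key x %% #|T| = key y %% #|T|)%N by rewrite H.
rewrite /key !modnMDl !modn_small ?ltn_ord // => /val_inj.
exact: enum_rank_inj.
Qed.

Lemma f_inj : injective f.
Proof.
move=> x y H; apply: key_inj.
have Hle : forall a b, key a < key b -> f a < f b.
  move=> a b Hab; apply: proper_card; apply/properP; split.
    by apply/subsetP => z; rewrite !inE => Hz; apply: leq_trans Hz (ltnW Hab).
  by exists b; rewrite !inE ?leqnn // -ltnNge.
case: (ltngtP (key x) (key y)) => // Hxy.
  by have := Hle _ _ Hxy; rewrite H ltnn.
by have := Hle _ _ Hxy; rewrite H ltnn.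
Qed.

Lemma f_range x : 1 <= f x <= #|T|.
Proof.
rewrite max_card andbT; apply/card_gt0P; exists x; by rewrite inE.
Qed.

Lemma f_le_K x : f x <= #|[set y | K y <= K x]|.
Proof.
apply: subset_leq_card; apply/subsetP => y; rewrite !inE => H.
rewrite leqNgt; apply/negP => /key_lt; rewrite ltnNge H //.
Qed.

Lemma f_plus x (B : {set T}) : B \subset [set y | K x < K y] -> f x + #|B| <= #|T|.
Proof.
move=> HB; rewrite -cardsUI.
have -> : [set y | key y <= key x] :&: B = set0.
  apply/setP => y; rewrite !inE; apply/negP => /andP[H1 H2].
  move: (subsetP HB _ H2); rewrite inE => /key_lt; rewrite ltnNge H1 //.
by rewrite cards0 addn0 max_card.
Qed.

Lemma cnt_sum (P : pred T) i :
  #|[set y | P y && (st y < i)]| = \sum_(k < i) #|[set y | P y && (st y == k)]|.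
Proof.
elim: i => [|i IH].
  by rewrite big_ord0; apply/eqP; rewrite cards_eq0; apply/eqP/setP => y; rewrite !inE andbF.
rewrite big_ord_recr /= -IH -cardsUI.
have -> : [set y | P y && (st y < i)] :&: [set y | P y && (st y == i)] = set0.
  apply/setP => y; rewrite !inE; case: (P y) => //=; apply/negP => /andP[H1 /eqP H2].
  by rewrite H2 ltnn in H1.
rewrite cards0 addn0; apply: eq_card => y; rewrite !inE ltnS leq_eqVlt.
by case: (P y) => //=; rewrite orbC.
Qed.

Lemma leaf_split k :
  #|[set y | (cls y != 0) && (st y == k)]| = cs 1 k + cs 2 k.
Proof.
rewrite /cs -cardsUI.
have -> : [set x | (st x == k) && (cls x == 1)] :&: [set x | (st x == k) && (cls x == 2)] = set0.
  apply/setP => y; rewrite !inE; apply/negP => /andP[/andP[_ /eqP ->] /andP[]] //.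
rewrite cards0 addn0; apply: eq_card => y; rewrite !inE.
have := cls_le2 y; case: (cls y) => [|[|[|]]] //= _; rewrite ?andbF ?andbT ?orbF //.
Qed.

Lemma hub_cs k : #|[set y | (cls y == 0) && (st y == k)]| = cs 0 k.
Proof. by apply: eq_card => y; rewrite !inE andbC. Qed.

Variable d : nat.
Hypothesis Hd : cs 0 1 = d.
Hypothesis Hm1 : cs 2 1 = 0.
Hypothesis Z : forall i, 2 <= i <= s -> (0 <= z_tilde e S s i)%R.

Definition Hc j := \sum_(k < j) cs 0 k.
Definition Lc j := \sum_(k < j) (cs 1 k + cs 2 k).

Lemma Cn i : 1 <= i <= s ->
  Hc i.+1 + 1 <= d + Lc i.+1 + ((i == s) && (nonisol e (S s) == set0)).
Proof.
move=> Hi; have := C Hi; rewrite Hd Hm1 -/(Hc i.+1) -/(Lc i.+1).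
have Hz : (0 <= z_tilde e S s i)%R.
  case: (ltnP 1 i) => H; first by apply: Z; lia.
  have Hi1 : i = 1 by lia.
  by rewrite Hi1 /z_tilde big_geq.
move: Hz; move: (z_tilde e S s i) => z; lia.
Qed.

Lemma card_hubs i : #|[set y | (cls y == 0) && (st y < i)]| = Hc i.
Proof. rewrite cnt_sum; apply: eq_bigr => k _; exact: hub_cs. Qed.

Lemma card_leaves i : #|[set y | (cls y != 0) && (st y < i)]| = Lc i.
Proof. rewrite cnt_sum; apply: eq_bigr => k _; exact: leaf_split. Qed.

Lemma Hc_mono i j : i <= j -> Hc i <= Hc j.
Proof.
move=> H; rewrite -!card_hubs; apply: subset_leq_card; apply/subsetP => y.
by rewrite !inE => /andP[-> /leq_trans ->].
Qed.

Lemma card_all : #|T| = Hc s.+1 + Lc s.+1.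
Proof.
rewrite -card_hubs -card_leaves -cardsUI.
have -> : [set y | (cls y == 0) && (st y < s.+1)] :&: [set y | (cls y != 0) && (st y < s.+1)] = set0.
  by apply/setP => y; rewrite !inE; case: (cls y == 0) => /=; rewrite ?andbF.
rewrite cards0 addn0 -cardsT; apply: eq_card => y; rewrite !inE ltnS st_le.
by case: (cls y == 0).
Qed.

Lemma K_leaf y : cls y != 0 -> K y = s + 2 * (s - st y) + cls y.
Proof. by rewrite /K => /negbTE ->. Qed.
Lemma K_hub y : cls y = 0 -> K y = st y.
Proof. by rewrite /K => ->. Qed.

Lemma f_hub x : cls x = 0 -> f x <= Hc (st x).+1.
Proof.
move=> Hx; apply: leq_trans (f_le_K x) _; rewrite -card_hubs.
apply: subset_leq_card; apply/subsetP => y; rewrite !inE (K_hub Hx) ltnS.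
case: (eqVneq (cls y) 0) => [Hy|Hy] /=; first by rewrite (K_hub Hy).
rewrite (K_leaf Hy) => H; have := st_le x; lia.
Qed.

Lemma f_leaf x : cls x != 0 -> f x + Lc (st x) + (cls x == 1) * cs 2 (st x) <= #|T|.
Proof.
move=> Hx; have Hc2 := cls_le2 x; have Hsx := st_le x.
set B := [set y | (cls y != 0) && (st y < st x)] :|:
         [set y | (cls x == 1) && (st y == st x) && (cls y == 2)].
have HB : B \subset [set y | K x < K y].
  apply/subsetP => y; rewrite !inE (K_leaf Hx) => /orP[/andP[Hy Hst]|/andP[/andP[H1 /eqP H2] /eqP H3]].
    rewrite (K_leaf Hy); have := cls_le2 y; lia.
  rewrite (K_leaf (y := y)) ?H3 //; move: H1 => /eqP; lia.
have := f_plus HB; rewrite -addnA; apply: leq_trans; rewrite leq_add2l.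
have HI : [set y | (cls y != 0) && (st y < st x)] :&:
          [set y | (cls x == 1) && (st y == st x) && (cls y == 2)] = set0.
  apply/setP => y; rewrite !inE; apply/negP => /andP[/andP[_ H1] /andP[/andP[_ /eqP H2] _]].
  by rewrite H2 ltnn in H1.
have := cardsUI [set y | (cls y != 0) && (st y < st x)]
          [set y | (cls x == 1) && (st y == st x) && (cls y == 2)].
rewrite HI cards0 addn0 -/B => ->; rewrite card_leaves leq_add2l.
case: (eqVneq (cls x) 1) => H1 /=.
  rewrite mul1n /cs; apply: subset_leq_card; apply/subsetP => y; rewrite !inE.
  by [].
by rewrite mul0n.
Qed.

Lemma edge_half x y : e x y -> cls y != 0 -> f x + f y <= #|T| + d.
Proof.
move=> exy Hy; case: (edge_cls exy Hy) => Hx Hcase.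
have fx := f_hub Hx.
have fy := f_leaf Hy.
have Hy1 := st_ge1 y; have Hx1 := st_ge1 x; have Hsy := st_le y.
case: Hcase => [Hlt | [Heq H1]].
- have Hm := Hc_mono Hlt.
  have Hi : 1 <= (st y).-1 <= s by lia.
  have Hp : 0 < st y by lia.
  have Hq : (st y).-1 < s by lia.
  have := Cn Hi; rewrite (prednK Hp) (ltn_eqF Hq) /= => HC.
  move: fy; move: ((cls y == 1) * cs 2 (st y)) => w fy.
  set p := #|T| in fy *. lia.
- have Hi : 1 <= st y <= s by lia.
  have := Cn Hi; rewrite /Lc big_ord_recr /= -/(Lc (st y)) => HC.
  have HU := cs_u Hi.
  have Hpos : 0 < cs 1 (st y).
    by apply/card_gt0P; exists y; rewrite inE eqxx H1.
  move: fy; rewrite H1 eqxx mul1n => fy.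
  rewrite Heq in fx.
  set p := #|T| in fy *.
  move: HC HU; case: (_ && _) => /=; lia.
Qed.

Lemma edge_bound x y : e x y -> f x + f y <= #|T| + d.
Proof.
move=> exy.
case: (eqVneq (cls y) 0) => Hy; last exact: edge_half.
case: (eqVneq (cls x) 0) => Hx; last by rewrite addnC; apply: edge_half; rewrite // esym.
have fx := f_hub Hx; have fy := f_hub Hy.
have mx : Hc (st x).+1 <= Hc s.+1 by apply: Hc_mono; rewrite ltnS st_le.
have my : Hc (st y).+1 <= Hc s.+1 by apply: Hc_mono; rewrite ltnS st_le.
have Hs : 1 <= s <= s by lia.
have HC := Cn Hs; have HA := card_all.
set p := #|T| in HA fx fy *.
move: HC; case: (_ && _) => /= HC. all: lia.
Qed.

End Main.

Lemma big_label (T : finType) (A : {set T}) (g : T -> nat) :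
  injective g -> (forall x, 1 <= g x) -> 0 < #|A| -> exists2 a, a \in A & #|A| <= g a.
Proof.
move=> ginj g1 A0.
case: (boolP [exists a in A, #|A| <= g a]) => [/exists_inP [a Ha Hga]|/exists_inPn H].
  by exists a.
have := @uniq_leq_size _ (map g (enum A)) (iota 1 (#|A|.-1)).
rewrite size_map size_iota -cardE map_inj_uniq ?enum_uniq // => /(_ isT).
have Hsub : {subset map g (enum A) <= iota 1 (#|A|.-1)}.
  move=> z /mapP [a]; rewrite mem_enum => Ha ->; rewrite mem_iota g1 /=.
  have := H a Ha; rewrite -ltnNge; lia.
move=> /(_ Hsub); lia.
Qed.

Lemma mindeg_le (T : finType) (e : rel T) v : min_deg e <= degin e [set: T] v.
Proof.
rewrite /min_deg /min_deg_on.
case: ifP => [/eqP H|_]; first by [].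
by apply: bigmin_le; rewrite inE.
Qed.

Unset Implicit Arguments.
Theorem mainTheorem2 (T : finType) (e : rel T) :
  symmetric e -> irreflexive e ->
  1 <= min_deg e -> min_deg e <= #|T| - 2 ->
  (exists (Gs : nat -> {set T}) (s : nat),
      delta_seq e Gs s /\
      (forall i, 2 <= i <= s -> (0 <= z_tilde e Gs s i)%R)) ->
  is_strength e (#|T| + min_deg e).
Proof.
move=> esym eirr Hd1 _ [Gs [s [[s2 S1 Hsteps Hterm] Z]]].
have Tne : 0 < #|T|.
  rewrite lt0n; apply/negP => /eqP H.
  move: Hd1; rewrite /min_deg /min_deg_on.
  have -> : [set: T] == set0 by apply/eqP/setP => x; have := card0_eq H x; rewrite !inE.
  by [].
have lower : forall g, numbering g -> #|T| + min_deg e <= str_f e g.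
  move=> g [ginj grange].
  have g1 : forall x, 1 <= g x by move=> x; case/andP: (grange x).
  have T0 : 0 < #|[set: T]| by rewrite cardsT.
  have [v _ Hv] := big_label ginj g1 T0.
  rewrite cardsT in Hv.
  have Hdeg := mindeg_le e v.
  have N0 : 0 < #|[set w in [set: T] | e v w]| by move: Hdeg; rewrite /degin; lia.
  have [w Hw Hgw] := big_label ginj g1 N0.
  rewrite /str_f; apply: (@bigmax_sup _ v) => //.
  apply: (@bigmax_sup _ w); first by move: Hw; rewrite !inE.
  move: Hgw Hdeg; rewrite /degin; lia.
have [x0 _] : exists x : T, true by case/card_gt0P: Tne => x _; exists x.
have Hu : forall i, exists v : T,
    (1 <= i < s -> [/\ v \in nonisol e (Gs i),
      degin e (nonisol e (Gs i)) v = min_deg_on e (nonisol e (Gs i)) &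
      Gs i.+1 = nonisol e (Gs i) :\: closed_nbhd e (Gs i) v]) /\
    (i = s -> nonisol e (Gs s) != set0 -> v \in nonisol e (Gs s)).
  move=> i; case: (boolP (1 <= i < s)) => Hi.
    have [_ [v Hv [H1 H2]]] := Hsteps i Hi.
    exists v; split => // Heq.
    by move: Hi; rewrite Heq ltnn andbF.
  case: (eqVneq i s) => [->|Hne].
    case: (set_0Vmem (nonisol e (Gs s))) => [->|[v Hv]].
      by exists x0; split => //; rewrite eqxx.
    by exists v.
  exists x0; split => H //.
  by move: Hne; rewrite H eqxx.
pose u i := proj1_sig (constructive_indefinite_description _ (Hu i)).
have Hustep : forall i, 1 <= i < s -> [/\ u i \in nonisol e (Gs i),
      degin e (nonisol e (Gs i)) (u i) = min_deg_on e (nonisol e (Gs i)) &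
      Gs i.+1 = nonisol e (Gs i) :\: closed_nbhd e (Gs i) (u i)].
  by move=> i; case: (proj2_sig (constructive_indefinite_description _ (Hu i))).

have Hulast : nonisol e (Gs s) != set0 -> u s \in nonisol e (Gs s).
  by case: (proj2_sig (constructive_indefinite_description _ (Hu s))) => _ H; apply: H.
have nonT : nonisol e [set: T] = [set: T].
  apply/setP => x; rewrite !inE /=; have := mindeg_le e x; lia.
have Hd : cs e s Gs u 0 1 = min_deg e.
  rewrite (cs_hub eirr s2 S1 Hustep Hulast (k := 1)) ?(ltnW s2) //.
  by rewrite /delta_i (ltn_eqF s2) S1 nonT.
have Hm1 : cs e s Gs u 2 1 = 0.
  rewrite (cs_iso s2 S1 Hustep Hulast (k := 1)) ?(ltnW s2) //.
  rewrite /m_of S1; apply/eqP; rewrite cards_eq0; apply/eqP/setP => x.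
  rewrite !inE /=; have := mindeg_le e x; lia.
split.
  exists (f e s Gs u); split.
    split; first exact: f_inj.
    move=> x; exact: f_range.
  apply/eqP; rewrite eqn_leq lower; last first.
    by split; [exact: f_inj | move=> x; exact: f_range].
  rewrite andbT; apply/bigmax_leqP => x _; apply/bigmax_leqP => y exy.
  exact: (edge_bound esym eirr s2 S1 Hustep Hulast Hd Hm1 Z).
exact: lower.
Qed.
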